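(* Let $X$ be an irreducible affine variety and $\mathcal E\subset\operatorname{End}(X)$ a linear semigroup. The following are equivalent: (i) $\mathcal E$ has a dense orbit in $X$; (ii) $d(X)=\dim X$; (iii) there exists $x\in X$ with $\mathcal E(x)=X$; (iv) $\mathcal E(x)=X$ for all $x$ in an open dense subset of $X$. If these hold, then $X$ is a vector space (isomorphic to an affine space).
   Context: $\Bbbk$ is algebraically closed of characteristic $0$. $\operatorname{End}(X)$ is the semigroup of morphisms $X\to X$. A semi-subgroup $\mathcal E\subset\operatorname{End}(X)$ (closed under composition, containing $\mathrm{id}_X$) is a linear semigroup if there is a closed embedding $X\hookrightarrow V$ into a finite-dimensional vector space such that the image of $\mathcal E$ in $\operatorname{Mor}(X,V)$ is a linear subspace. $\mathcal E(x)=\{\phi(x)\mid\phi\in\mathcal E\}$ is the orbit of $x$; $d(X)=\max_{x\in X}\dim\overline{\mathcal E(x)}$. *)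

(* Defs.v *)
(* Affine varieties are modelled as
   Zariski-closed subsets of k^n, points are row vectors 'rV[k]_n. *)
From HB Require Import structures.
From mathcomp Require Import all_boot all_order all_algebra.
From mathcomp Require Import mpoly.
Set Implicit Arguments. Unset Strict Implicit. Unset Printing Implicit Defensive.
Import GRing.Theory.
Local Open Scope ring_scope.

Section AffGeom.
Variable k : closedFieldType.

Definition pt (n : nat) := 'rV[k]_n.

Definition evalp n (p : {mpoly k[n]}) (x : pt n) : k := p.@[fun i => x 0 i].

Definition zero_set n (S : {mpoly k[n]} -> Prop) : pt n -> Prop :=
  fun x => forall p, S p -> evalp p x = 0.

Definition zclosed n (A : pt n -> Prop) : Prop :=
  exists S : {mpoly k[n]} -> Prop, forall x, A x <-> zero_set S x.

Definition zclosure n (A : pt n -> Prop) : pt n -> Prop :=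
  fun x => forall p : {mpoly k[n]}, (forall y, A y -> evalp p y = 0) -> evalp p x = 0.

Definition dense_in n (A X : pt n -> Prop) : Prop :=
  forall x, X x -> zclosure A x.

Definition subset_of n (A B : pt n -> Prop) : Prop := forall x, A x -> B x.

Definition zirreducible n (X : pt n -> Prop) : Prop :=
  (exists x, X x) /\
  forall Z1 Z2 : pt n -> Prop, zclosed Z1 -> zclosed Z2 ->
    (forall x, X x -> Z1 x \/ Z2 x) ->
    subset_of X Z1 \/ subset_of X Z2.

Definition has_chain n (X : pt n -> Prop) (d : nat) : Prop :=
  exists Z : nat -> pt n -> Prop,
    (forall i, (i <= d)%N -> zclosed (Z i) /\ zirreducible (Z i)) /\
    (forall i, (i < d)%N -> subset_of (Z i) (Z i.+1) /\ ~ subset_of (Z i.+1) (Z i)) /\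
    subset_of (Z d) X.

Definition is_dim n (X : pt n -> Prop) (d : nat) : Prop :=
  has_chain X d /\ ~ has_chain X d.+1.

Definition polymap n m (P : 'I_m -> {mpoly k[n]}) (x : pt n) : pt m :=
  \row_i evalp (P i) x.

Definition is_morph n m (X : pt n -> Prop) (f : pt n -> pt m) : Prop :=
  exists P : 'I_m -> {mpoly k[n]}, forall x, X x -> f x = polymap P x.

Definition is_endo n (X : pt n -> Prop) (f : pt n -> pt n) : Prop :=
  is_morph X f /\ forall x, X x -> X (f x).

(* E is a semi-subgroup of End(X); maps are identified when equal on X *)
Definition endo_semigroup n (X : pt n -> Prop) (E : (pt n -> pt n) -> Prop) : Prop :=
  (forall f, E f -> is_endo X f) /\
  (exists f, E f /\ forall x, X x -> f x = x) /\
  (forall f g, E f -> E g -> exists h, E h /\ forall x, X x -> h x = f (g x)).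

Definition closed_embedding n m (X : pt n -> Prop) (iota : pt n -> pt m) : Prop :=
  is_morph X iota /\
  zclosed (fun y => exists x, X x /\ y = iota x) /\
  exists Q : 'I_n -> {mpoly k[m]}, forall x, X x -> polymap Q (iota x) = x.

(* linear semigroup: for some closed embedding X -> V = k^m, the image
   {iota \o f | f in E} is a linear subspace of Mor(X, V) *)
Definition linear_semigroup n (X : pt n -> Prop) (E : (pt n -> pt n) -> Prop) : Prop :=
  endo_semigroup X E /\
  exists (m : nat) (iota : pt n -> pt m),
    closed_embedding X iota /\
    forall (f g : pt n -> pt n) (a : k), E f -> E g ->
      exists h, E h /\ forall x, X x -> iota (h x) = a *: iota (f x) + iota (g x).

Definition Eorbit n (E : (pt n -> pt n) -> Prop) (x : pt n) : pt n -> Prop :=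
  fun y => exists f, E f /\ y = f x.

Definition is_dX n (X : pt n -> Prop) (E : (pt n -> pt n) -> Prop) (d : nat) : Prop :=
  (exists x, X x /\ is_dim (zclosure (Eorbit E x)) d) /\
  (forall x e, X x -> is_dim (zclosure (Eorbit E x)) e -> (e <= d)%N).

End AffGeom.

(* Main.v *)
Require Import Defs.
From HB Require Import structures.
From mathcomp Require Import all_boot all_order all_algebra.
From mathcomp Require Import mpoly.
From mathcomp Require Import boolp classical_sets functions.
From mathcomp Require Import ring.
Import GRing.Theory.
Local Open Scope ring_scope.
Set Implicit Arguments. Unset Strict Implicit. Unset Printing Implicit Defensive.
From mathcomp Require Import zify.
Section Basics.
Variable k : closedFieldType.
Implicit Types n m : nat.

Lemma evalpD n (p q : {mpoly k[n]}) x : evalp (p + q) x = evalp p x + evalp q x.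
Proof. by rewrite /evalp mevalD. Qed.
Lemma evalpB n (p q : {mpoly k[n]}) x : evalp (p - q) x = evalp p x - evalp q x.
Proof. by rewrite /evalp mevalB. Qed.
Lemma evalpM n (p q : {mpoly k[n]}) x : evalp (p * q) x = evalp p x * evalp q x.
Proof. by rewrite /evalp mevalM. Qed.
Lemma evalpC n c (x : pt k n) : evalp (c%:MP : {mpoly k[n]}) x = c.
Proof. by rewrite /evalp mevalC. Qed.
Lemma evalp1 n (x : pt k n) : evalp (1 : {mpoly k[n]}) x = 1.
Proof. by rewrite /evalp meval1. Qed.
Lemma evalp0 n (x : pt k n) : evalp (0 : {mpoly k[n]}) x = 0.
Proof. by rewrite /evalp meval0. Qed.
Lemma evalpXU n i (x : pt k n) : evalp ('X_i : {mpoly k[n]}) x = x 0 i.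
Proof. by rewrite /evalp mevalXU. Qed.
Lemma evalpZ n c (p : {mpoly k[n]}) x : evalp (c *: p) x = c * evalp p x.
Proof. by rewrite /evalp mevalZ. Qed.
Lemma evalp_sum n (I : Type) (r : seq I) (P : pred I) (F : I -> {mpoly k[n]}) x :
  evalp (\sum_(i <- r | P i) F i) x = \sum_(i <- r | P i) evalp (F i) x.
Proof. by rewrite /evalp raddf_sum. Qed.

Definition ptup n m (P : 'I_m -> {mpoly k[n]}) : m.-tuple {mpoly k[n]} :=
  [tuple P i | i < m].

Lemma evalp_comp n m (p : {mpoly k[m]}) (P : 'I_m -> {mpoly k[n]}) x :
  evalp (p \mPo ptup P) x = evalp p (polymap P x).
Proof.
rewrite /evalp comp_mpoly_meval; apply: meval_eq => i.
by rewrite tnth_mktuple /polymap mxE.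
Qed.

Lemma polymap_comp n m l (P : 'I_m -> {mpoly k[n]}) (Q : 'I_l -> {mpoly k[m]}) x :
  polymap Q (polymap P x) = polymap (fun i => Q i \mPo ptup P) x.
Proof. by apply/rowP => i; rewrite /polymap !mxE evalp_comp. Qed.

Lemma zclosure_closed n (A : pt k n -> Prop) : zclosed (zclosure A).
Proof.
exists (fun p => forall y, A y -> evalp p y = 0) => x; split.
- by move=> H p Hp; apply: H.
- by move=> H p Hp; apply: H.
Qed.

Lemma sub_zclosure n (A : pt k n -> Prop) : subset_of A (zclosure A).
Proof. by move=> x Ax p Hp; apply: Hp. Qed.

Lemma zclosure_min n (A X : pt k n -> Prop) :
  zclosed X -> subset_of A X -> subset_of (zclosure A) X.
Proof.
move=> [S HS] AX x Hx; apply/HS => p Sp; apply: Hx => y Ay.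
by move/AX/HS: Ay; apply.
Qed.

Lemma closedT n : zclosed (fun _ : pt k n => True).
Proof.
exists (fun p => p = 0) => x; split => // _ p ->; exact: evalp0.
Qed.

Lemma closedI n (A B : pt k n -> Prop) :
  zclosed A -> zclosed B -> zclosed (fun x => A x /\ B x).
Proof.
move=> [SA HA] [SB HB]; exists (fun p => SA p \/ SB p) => x; split.
- by case=> /HA Ha /HB Hb p [/Ha|/Hb].
- by move=> H; split; [apply/HA => p Hp; apply: H; left | apply/HB => p Hp; apply: H; right].
Qed.

Lemma closed_pre n m (P : 'I_m -> {mpoly k[n]}) (W : pt k m -> Prop) :
  zclosed W -> zclosed (fun x => W (polymap P x)).
Proof.
move=> [S HS]; exists (fun p => exists q, S q /\ p = q \mPo ptup P) => x; split.
- by move/HS => H p [q [Sq ->]]; rewrite evalp_comp; apply: H.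
- move=> H; apply/HS => q Sq; rewrite -evalp_comp; apply: H; by exists q.
Qed.

Lemma closed_zero_set n (S : {mpoly k[n]} -> Prop) : zclosed (zero_set S).
Proof. by exists S. Qed.

Lemma closed_ext n (A B : pt k n -> Prop) : (forall x, A x <-> B x) -> zclosed A -> zclosed B.
Proof. by move=> AB [S HS]; exists S => x; rewrite -AB. Qed.

Lemma zclosure0 n (x : pt k n) : ~ zclosure (fun _ => False) x.
Proof.
move=> H; have := H 1 (fun y (f : False) => match f with end).
by rewrite evalp1; apply/eqP; rewrite oner_eq0.
Qed.

Lemma chain_mono n (X : pt k n -> Prop) d (Z : nat -> pt k n -> Prop) :
  (forall i, (i < d)%N -> subset_of (Z i) (Z i.+1)) ->
  forall i j, (i <= j)%N -> (j <= d)%N -> subset_of (Z i) (Z j).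
Proof.
move=> H i j; elim: j => [|j IH]; first by rewrite leqn0 => /eqP -> _.
rewrite leq_eqVlt => /orP [/eqP -> _ x //|]; rewrite ltnS => ij jd x Zx.
apply: (H j jd); apply: IH => //; exact: ltnW.
Qed.

Lemma has_chain_le n (X : pt k n -> Prop) d e :
  has_chain X d -> (e <= d)%N -> has_chain X e.
Proof.
move=> [Z [H1 [H2 H3]]] ed; exists Z; split; [|split].
- by move=> i ie; apply: H1; apply: leq_trans ed.
- by move=> i ie; apply: H2; apply: leq_trans ed.
- move=> x Zx; apply: H3.
  exact: (chain_mono X (d:=d) (Z:=Z) (fun i id => (H2 i id).1) ed (leqnn d) Zx).
Qed.

Lemma has_chain_sub n (X Y : pt k n -> Prop) d :
  subset_of X Y -> has_chain X d -> has_chain Y d.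
Proof.
move=> XY [Z [H1 [H2 H3]]]; exists Z; split => //; split => // x /H3; exact: XY.
Qed.

Lemma is_dim_ext n (X Y : pt k n -> Prop) d :
  (forall x, X x <-> Y x) -> is_dim X d -> is_dim Y d.
Proof.
move=> XY [H1 H2]; split.
- by apply: has_chain_sub H1 => x /XY.
- by move=> H; apply: H2; apply: has_chain_sub H => x /XY.
Qed.

Lemma chain_extend n (X Y : pt k n -> Prop) d :
  has_chain Y d -> subset_of Y X -> zclosed X -> zirreducible X ->
  ~ subset_of X Y -> has_chain X d.+1.
Proof.
move=> [Z [H1 [H2 H3]]] YX Xc Xi nXY.
exists (fun i => if (i <= d)%N then Z i else X); split; [|split].
- move=> i; case: ifP => [id _|_ _]; [exact: H1|by split].
- move=> i; rewrite ltnS => id; case: (ltnP i d) => [ilt|ige].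
  + by rewrite (ltnW ilt); apply: H2.
  + have -> : i = d by apply/eqP; rewrite eqn_leq id ige.
    rewrite leqnn ?ltnn; split; first by move=> x /H3 /YX.
    by move=> H; apply: nXY => x /H /H3.
- by rewrite ltnn.
Qed.

Lemma chain_transport n m (A : pt k n -> Prop) (B : pt k m -> Prop)
  (phi : pt k n -> pt k m) (psi : pt k m -> pt k n) d :
  zclosed B -> is_morph A phi -> is_morph B psi ->
  (forall a, A a -> B (phi a)) -> (forall b, B b -> A (psi b)) ->
  (forall a, A a -> psi (phi a) = a) -> (forall b, B b -> phi (psi b) = b) ->
  has_chain A d -> has_chain B d.
Proof.
move=> Bc [Pphi Hphi] [Ppsi Hpsi] AB BA psiphi phipsi [Z [H1 [H2 H3]]].
have ZA i : (i <= d)%N -> subset_of (Z i) A.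
  move=> id x Zx; apply: H3.
  exact: (chain_mono A (d:=d) (Z:=Z) (fun i id => (H2 i id).1) id (leqnn d) Zx).
exists (fun i b => B b /\ Z i (psi b)); split; [|split].
- move=> i id; have [Zc Zirr] := H1 i id; split.
  + apply: (closed_ext (A := fun b => B b /\ Z i (polymap Ppsi b))).
      by move=> b; split => -[Bb H]; split => //; [rewrite Hpsi | rewrite -Hpsi].
    apply: closedI => //; exact: closed_pre.
  + case: Zirr => [[z Zz] Hirr]; split.
      exists (phi z); have Az := ZA i id z Zz.
      by rewrite psiphi //; split => //; apply: AB.
    move=> W1 W2 W1c W2c HW.
    have cov : forall x, Z i x -> W1 (polymap Pphi x) \/ W2 (polymap Pphi x).
      move=> x Zx; have Ax := ZA i id x Zx; rewrite -Hphi //.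
      by apply: HW; split; [apply: AB|rewrite psiphi].
    have [H|H] := Hirr _ _ (closed_pre _ W1c) (closed_pre _ W2c) cov.
    * left => b [Bb Zb]; have := H _ Zb; rewrite -Hphi ?phipsi //; exact: BA.
    * right => b [Bb Zb]; have := H _ Zb; rewrite -Hphi ?phipsi //; exact: BA.
- move=> i id; have [S1 S2] := H2 i id; split.
    by move=> b [Bb Zb]; split => //; apply: S1.
  move=> H; apply: S2 => x Zx.
  have Ax : A x by apply: (ZA i.+1 id).
  have [_ ] := H (phi x) (conj (AB x Ax) (eq_ind_r (Z i.+1) Zx (psiphi x Ax))).
  by rewrite psiphi.
- by move=> b [].
Qed.

End Basics.
Section Uni.
Local Notation widen := (widen_ord (leqnSn _)).
Variable k : closedFieldType.

Definition mres s (m : 'X_{1..s.+1}) : 'X_{1..s} := [multinom m (widen i) | i < s].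

Lemma mnm_split s (m1 m2 : 'X_{1..s.+1}) :
  (m1 == m2) = (mres m1 == mres m2) && (m1 ord_max == m2 ord_max).
Proof.
apply/eqP/andP => [->|[/eqP e1 /eqP e2]]; first by [].
apply/mnmP => i; have [j ->|->] := unliftP ord_max i => //.
have := congr1 (fun m : 'X_{1..s} => m j) e1; rewrite /mres !mnmE.
by have -> : lift ord_max j = widen j by apply/val_inj; rewrite /= /bump leqNgt ltn_ord.
Qed.

Lemma muni_coef s (p : {mpoly k[s.+1]}) (m0 : 'X_{1..s.+1}) :
  ((muni p)`_(m0 ord_max))@_(mres m0) = p@_m0.
Proof.
rewrite [in RHS](mpolyE p) muniE coef_sum !raddf_sum /=.
apply: eq_bigr => m _.
rewrite coefZ coefXn mcoeffZ mcoeffX mnm_split.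
case: (m0 ord_max =P m ord_max) => [->|ne].
  by rewrite eqxx mulr1 andbT mcoeffZ mcoeffX.
have /negbTE-> : m ord_max != m0 ord_max by apply/eqP => e; apply: ne; rewrite e.
by rewrite mulr0 mcoeff0 andbF mulr0.
Qed.

Lemma muni_inj s (p : {mpoly k[s.+1]}) : muni p = 0 -> p = 0.
Proof.
move=> H; apply/mpolyP => m; by rewrite -muni_coef H coef0 !mcoeff0.
Qed.

Lemma muni_eval s (p : {mpoly k[s.+1]}) (v : 'I_s.+1 -> k) :
  p.@[v] = (map_poly (meval (fun i => v (widen i))) (muni p)).[v ord_max].
Proof.
rewrite muniE mevalE raddf_sum horner_sum /=; apply: eq_bigr => m _.
rewrite map_polyZ hornerZ map_polyXn hornerXn /= mevalZ mevalX.
rewrite big_ord_recr /= mulrA; congr (_ * _ * _).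
by apply: eq_bigr => i _; rewrite mnmE.
Qed.

Lemma natr_inj_char0 (F : fieldType) : [pchar F] =i pred0 -> injective (fun i : nat => i%:R : F).
Proof.
move=> ch i j /eqP; wlog ij : i j / (i <= j)%N.
  move=> H; case: (leqP i j) => [/H //|/ltnW ji]; rewrite eq_sym => /(H _ _ ji) //.
rewrite -(subnKC ij) natrD -subr_eq0 opprD addrA subrr add0r oppr_eq0.
by rewrite (proj1 (pcharf0P F) ch) => /eqP ->; rewrite addn0.
Qed.

Lemma poly_nonvanish (p : {poly k}) : [pchar k] =i pred0 -> p != 0 -> exists t, p.[t] != 0.
Proof.
move=> ch pn0; apply: contrapT => H.
have rt : all (root p) [seq i%:R | i <- iota 0 (size p)].
  apply/allP => x /mapP [i _ ->]; apply/negPn/negP => Hn; apply: H; by exists i%:R.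
have U : uniq ([seq i%:R | i <- iota 0 (size p)] : seq k).
  rewrite map_inj_uniq ?iota_uniq //; exact: natr_inj_char0.
by have := max_poly_roots pn0 rt U; rewrite size_map size_iota ltnn.
Qed.

Lemma mpoly_nonvanish s (p : {mpoly k[s]}) : [pchar k] =i pred0 ->
  p != 0 -> exists v : 'I_s -> k, p.@[v] != 0.
Proof.
move=> ch; elim: s p => [|s IH] p pn0.
  exists (fun _ => 0); rewrite (nvar0_mpolyC p) mevalC.
  by move: pn0; rewrite {1}(nvar0_mpolyC p) mpolyC_eq0.
have Qn0 : muni p != 0 by apply/negP => /eqP /muni_inj /eqP; apply/negP.
have lc0 : lead_coef (muni p) != 0 by rewrite lead_coef_eq0.
have [v Hv] := IH _ lc0.
have Q'n0 : map_poly (meval v) (muni p) != 0.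
  by rewrite -size_poly_eq0 size_map_poly_id0 // size_poly_eq0.
have [t Ht] := poly_nonvanish ch Q'n0.
pose v' (i : 'I_s.+1) := if insub (val i) is Some j then v j else t.
exists v'; rewrite muni_eval.
have -> : v' ord_max = t by rewrite /v' insubF //= ltnn.
have -> : meval (fun i => v' (widen i)) = meval v.
  apply/funext => q; apply: meval_eq => i; rewrite /v' insubT ?ltn_ord //= => Hi.
  by congr v; apply: val_inj.
by [].
Qed.

End Uni.

Lemma size_map_le (aR rR : nzSemiRingType) (f : aR -> rR) (p : {poly aR}) :
  (size (map_poly f p) <= size p)%N.
Proof. rewrite /map_poly; exact: size_poly. Qed.

Section KRing.
Variables (k : closedFieldType) (r s : nat) (Z : pt k r -> Prop) (z0 : pt k r)
  (hz0 : Z z0) (sigma : 'I_s -> 'I_r).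

Definition KT := {z : pt k r | Z z}.
HB.instance Definition _ := gen_eqMixin KT.
HB.instance Definition _ := gen_choiceMixin KT.
HB.instance Definition _ := isPointed.Build KT (exist _ z0 hz0).
Definition K := KT -> k.

Lemma K_ext (f g : K) : (forall z, f z = g z) -> f = g.
Proof. exact: funext. Qed.

Definition evK (q : {mpoly k[r]}) : K := fun z => evalp q (proj1_sig z).
Definition RtoK (p : {mpoly k[s]}) : K := fun z => p.@[fun i => (proj1_sig z) 0 (sigma i)].

Lemma evK_add : {morph evK : x y / x - y}.
Proof. by move=> x y; apply/funext => z; rewrite /evK /evalp mevalB. Qed.
HB.instance Definition _ := GRing.isAdditive.Build {mpoly k[r]} K evK evK_add.
Lemma evK_mul : multiplicative evK.
Proof.
split; first by move=> x y; apply/funext => z; rewrite /evK /evalp mevalM.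
by apply/funext => z; rewrite /evK /evalp meval1.
Qed.
HB.instance Definition _ := GRing.isMultiplicative.Build {mpoly k[r]} K evK evK_mul.

Lemma RtoK_add : {morph RtoK : x y / x - y}.
Proof. by move=> x y; apply/funext => z; rewrite /RtoK mevalB. Qed.
HB.instance Definition _ := GRing.isAdditive.Build {mpoly k[s]} K RtoK RtoK_add.
Lemma RtoK_mul : multiplicative RtoK.
Proof.
split; first by move=> x y; apply/funext => z; rewrite /RtoK mevalM.
by apply/funext => z; rewrite /RtoK meval1.
Qed.
HB.instance Definition _ := GRing.isMultiplicative.Build {mpoly k[s]} K RtoK RtoK_mul.

Definition evz (z : KT) (f : K) : k := f z.
Lemma evz_add z : {morph evz z : x y / x - y}. Proof. by []. Qed.
HB.instance Definition _ z := GRing.isAdditive.Build K k (evz z) (evz_add z).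
Lemma evz_mul z : multiplicative (evz z). Proof. by []. Qed.
HB.instance Definition _ z := GRing.isMultiplicative.Build K k (evz z) (evz_mul z).

Definition evP (P : {poly {mpoly k[s]}}) (x : pt k r) (t : k) :=
  (map_poly (meval (fun i => x 0 (sigma i))) P).[t].

Lemma evK_horner (P : {poly {mpoly k[s]}}) (q : {mpoly k[r]}) (z : KT) :
  (map_poly RtoK P).[evK q] z = evP P (proj1_sig z) (evalp q (proj1_sig z)).
Proof.
rewrite /evP -[LHS]/(evz z _) -horner_map -map_poly_comp.
by congr (_.[_]); apply: eq_map_poly.
Qed.

Definition integral_of_lead (P : {poly {mpoly k[s]}}) (u : K) :
  P != 0 -> (map_poly RtoK P).[u] = 0 ->
  integralOver RtoK (RtoK (lead_coef P) * u).
Proof.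
move=> Pn0 Pu; set c := lead_coef P; set d := (size P).-1.
have cn0 : c != 0 by rewrite lead_coef_eq0.
have sP : size P = d.+1 by rewrite /d prednK // lt0n size_poly_eq0.
case: d sP => [|d] sP.
  have -> : RtoK c * u = 0.
    have sP1 : (size P <= 1)%N by rewrite sP.
    move: Pu; rewrite (size1_polyC sP1) map_polyC hornerC.
    have -> : c = P`_0 by rewrite /c /lead_coef sP.
    by move=> ->; rewrite mul0r.
  exact: integral0.
pose Q := \poly_(i < d.+2) (if i == d.+1 then 1 else P`_i * c ^+ (d - i)).
exists Q.
  rewrite monicE /lead_coef size_poly_eq /= ?eqxx ?oner_eq0 //.
  by rewrite coef_poly ltnSn eqxx.
rewrite /root; apply/eqP.
have sQ : (size (map_poly RtoK Q) <= d.+2)%N.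
  by apply: leq_trans (size_map_le _ _) (size_poly _ _).
have sP' : (size (map_poly RtoK P) <= d.+2)%N.
  by rewrite -sP size_map_le.
rewrite (horner_coef_wide _ sQ).
move: Pu; rewrite (horner_coef_wide _ sP') => Pu.
transitivity (RtoK c ^+ d * \sum_(i < d.+2) (map_poly RtoK P)`_i * u ^+ i); last first.
  by rewrite Pu mulr0.
rewrite mulr_sumr; apply: eq_bigr => i _.
rewrite !coef_map /= coef_poly ltn_ord.
case: eqP => [->|ne].
  rewrite rmorph1 mul1r exprMn exprS mulrA [RtoK c ^+ d * _]mulrC.
  by have -> : P`_d.+1 = c by rewrite /c /lead_coef sP.
have id : (i <= d)%N by have := ltn_ord i; rewrite ltnS leq_eqVlt => /orP [/eqP/ne|].
rewrite rmorphM rmorphXn exprMn /=.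
have -> : RtoK c ^+ d = RtoK c ^+ (d - i) * RtoK c ^+ i by rewrite -exprD subnK.
ring.
Qed.

Definition algK (q : {mpoly k[r]}) :=
  exists2 P : {poly {mpoly k[s]}}, P != 0 & (map_poly RtoK P).[evK q] = 0.

Lemma integral_pow (u : K) n : integralOver RtoK u -> integralOver RtoK (u ^+ n).
Proof.
move=> iu; elim: n => [|n IH]; first by rewrite expr0; exact: integral1.
by rewrite exprS; apply: integral_mul.
Qed.

Lemma claimK_K : (forall j : 'I_r, algK 'X_j) -> forall q, algK q.
Proof.
move=> H.
have [Pj HPj] : {Pj : 'I_r -> {poly {mpoly k[s]}} &
    forall j, Pj j != 0 /\ (map_poly RtoK (Pj j)).[evK 'X_j] = 0}.
  apply: (@choice _ _ (fun j P => P != 0 /\ (map_poly RtoK P).[evK 'X_j] = 0)) => j.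
  have [P Pn0 HP] := H j; by exists P.
set c := \prod_(j < r) lead_coef (Pj j).
have cn0 : c != 0.
  apply/prodf_neq0 => j _; rewrite lead_coef_eq0; exact: (HPj j).1.
have intx j : integralOver RtoK (RtoK c * evK 'X_j).
  rewrite /c (bigD1 j) //= rmorphM [RtoK (lead_coef _) * _]mulrC -mulrA.
  apply: integral_mul; first exact: integral_id.
  by apply: integral_of_lead; case: (HPj j).
have intq q : exists N, integralOver RtoK (RtoK c ^+ N * evK q).
  elim/mpolyind: q => [|a m p _ _ [N1 IH]].
    by exists 0%N; rewrite rmorph0 mulr0; exact: integral0.
  exists (N1 + mdeg m)%N; rewrite rmorphD mulrDr; apply: integral_add.
  - rewrite exprD -mulrA; apply: integral_mul; first exact/integral_pow/integral_id.
    rewrite -[X in integralOver _ (_ * X)]/(evK (a *: 'X_[m])).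
    have -> : evK (a *: 'X_[m]) = RtoK a%:MP * \prod_(i < r) evK 'X_i ^+ m i.
      rewrite -mul_mpolyC rmorphM mpolyXE_id rmorph_prod; congr (_ * _).
        by apply: (@funext KT k) => z; rewrite /= /evK /RtoK /evalp !mevalC.
      by apply: eq_bigr => i _; rewrite rmorphXn.
    rewrite mdegE -prodrXr mulrCA -big_split /=.
    apply: integral_mul; first exact: integral_id.
    apply: (big_ind (integralOver RtoK)); [exact: integral1|exact: integral_mul|].
    by move=> i _; rewrite -exprMn; apply/integral_pow/intx.
  - rewrite addnC exprD -mulrA; apply: integral_mul => //.
    exact/integral_pow/integral_id.
move=> q; have [N [G Gmon Groot]] := intq q.
exists (G \Po ((c ^+ N) *: 'X)).
  rewrite -size_poly_eq0 size_comp_poly2 ?size_poly_eq0 ?monic_neq0 //.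
  by rewrite size_scale ?size_polyX // expf_neq0.
rewrite map_comp_poly horner_comp map_polyZ map_polyX hornerZ hornerX rmorphXn.
exact/eqP.
Qed.

End KRing.
Section Krull.
Variables (k : closedFieldType) (ch : [pchar k] =i pred0) (r : nat).
Local Notation widen := (widen_ord (leqnSn _)).

Definition free (Z : pt k r -> Prop) s (sg : 'I_s -> 'I_r) :=
  forall p : {mpoly k[s]}, (forall z, Z z -> p.@[fun i => z 0 (sg i)] = 0) -> p = 0.

Definition alg (Z : pt k r -> Prop) s (sg : 'I_s -> 'I_r) (q : {mpoly k[r]}) :=
  exists2 P : {poly {mpoly k[s]}}, P != 0 & forall z, Z z -> evP sg P z (evalp q z) = 0.

Lemma claimK (Z : pt k r -> Prop) s (sg : 'I_s -> 'I_r) z0 : Z z0 ->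
  (forall j, alg Z sg 'X_j) -> forall q, alg Z sg q.
Proof.
move=> hz0 H q.
have toK q' : alg Z sg q' -> algK hz0 sg q'.
  move=> [P Pn0 HP]; exists P => //; apply: K_ext => z.
  by rewrite evK_horner; apply: HP; case: z.
have [P Pn0 HP] := claimK_K (fun j => toK _ (H j)) q.
exists P => // z Zz; rewrite -(evK_horner hz0 sg P q (exist _ z Zz)) HP //.
Qed.

Lemma free_le Z s (sg : 'I_s -> 'I_r) : free Z sg -> (s <= r)%N.
Proof.
move=> fr; have inj : injective sg.
  move=> i j eij; apply: contrapT => nij.
  have : ('X_i - 'X_j : {mpoly k[s]}) = 0.
    by apply: fr => z _; rewrite mevalB !mevalXU eij subrr.
  move/eqP; rewrite subr_eq0 => /eqP /(congr1 (mcoeff U_(i))).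
  rewrite !mcoeffXU eqxx; case: eqP => [e|_]; first by move=> _; apply: nij; rewrite e.
  by move/eqP; rewrite oner_eq0.
by have := @leq_card _ _ sg inj; rewrite !card_ord.
Qed.

Lemma free0 Z (sg : 'I_0 -> 'I_r) : (exists z, Z z) -> free Z sg.
Proof.
move=> [z Zz] p H; rewrite (nvar0_mpolyC p); have := H z Zz.
by rewrite {1}(nvar0_mpolyC p) mevalC => ->.
Qed.

Lemma free_sub Z Z' s (sg : 'I_s -> 'I_r) : subset_of Z Z' -> free Z sg -> free Z' sg.
Proof. by move=> ZZ' fr p H; apply: fr => z /ZZ'; apply: H. Qed.

Definition ext s (sg : 'I_s -> 'I_r) (j : 'I_r) (i : 'I_s.+1) : 'I_r :=
  if insub (val i) is Some i' then sg i' else j.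

Lemma freeS Z s (sg : 'I_s -> 'I_r) j :
  free Z sg -> ~ alg Z sg 'X_j -> free Z (ext sg j).
Proof.
move=> fr nalg p H; apply: muni_inj; apply: contrapT => /eqP nz.
apply: nalg; exists (muni p) => // z Zz.
rewrite -(H z Zz) muni_eval /evP evalpXU.
have -> : ext sg j ord_max = j by rewrite /ext insubF //= ltnn.
congr (_.[_]); apply: eq_map_poly => q; apply: meval_eq => i.
rewrite /ext insubT ?ltn_ord //= => Hi.
by congr (z 0 (sg _)); apply: val_inj.
Qed.

Definition compsg s (sg : 'I_s -> 'I_r) (p : {mpoly k[s]}) : {mpoly k[r]} :=
  p \mPo ptup (fun i => 'X_(sg i)).

Lemma evalp_horner s (sg : 'I_s -> 'I_r) (Q : {poly {mpoly k[s]}}) q z :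
  evalp ((map_poly (compsg sg) Q).[q]) z = evP sg Q z (evalp q z).
Proof.
rewrite /evalp -horner_map /= -map_poly_comp /evP; congr (_.[_]).
apply: eq_map_poly => p /=; rewrite /compsg comp_mpoly_meval.
by apply: meval_eq => i; rewrite tnth_mktuple mevalXU.
Qed.

Lemma strict (Z Z' : pt k r -> Prop) s (sg : 'I_s -> 'I_r) :
  zclosed Z -> zirreducible Z' -> subset_of Z Z' -> ~ subset_of Z' Z ->
  free Z sg -> exists tau : 'I_s.+1 -> 'I_r, free Z' tau.
Proof.
move=> [S HS] [_ Z'irr] ZZ' nZ'Z fr.
have [z' [Z'z' nZz']] : exists z', Z' z' /\ ~ Z z'.
  apply: contrapT => H; apply: nZ'Z => x Z'x; apply: contrapT => nZx.
  by apply: H; exists x.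
have [q [Sq qz']] : exists q, S q /\ evalp q z' != 0.
  apply: contrapT => H; apply: nZz'; apply/HS => p Sp.
  apply/eqP; apply: contrapT => ne; apply: H; exists p; split => //; exact/negP.
have qZ z : Z z -> evalp q z = 0 by move/HS; apply.
have fr' := free_sub ZZ' fr.
case: (pselect (exists j, ~ alg Z' sg 'X_j)) => [[j nalg]|allalg].
  by exists (ext sg j); apply: freeS.
exfalso.
have algall j : alg Z' sg 'X_j.
  by apply: contrapT => H; apply: allalg; exists j.
have [P Pn0 HP] := claimK Z'z' algall q.
suff : forall n (P : {poly {mpoly k[s]}}), (size P <= n)%N -> P != 0 ->
   (forall z, Z' z -> evP sg P z (evalp q z) = 0) -> False.
  by move/(_ _ P (leqnn _) Pn0 HP).
elim => [|n IH] {}P sP {}Pn0 {}HP.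
  by move: sP; rewrite leqn0 size_poly_eq0 (negbTE Pn0).
case: (eqVneq P`_0 0) => [c0|c0].
  have /factor_theorem [Q PQ] : root P 0 by rewrite /root horner_coef0 c0.
  move: PQ; rewrite subr0 => PQ.
  have Qn0 : Q != 0 by apply: contraNneq Pn0 => Q0; rewrite PQ Q0 mul0r.
  have H1 z : Z' z -> evP sg Q z (evalp q z) * evalp q z = 0.
    by move=> Zz; rewrite -(HP z Zz) PQ /evP rmorphM /= map_polyX hornerMX.
  pose H := (map_poly (compsg sg) Q).[q].
  have cov : forall z, Z' z -> zero_set (fun p => p = H) z \/ zero_set (fun p => p = q) z.
    move=> z Zz; have /eqP := H1 z Zz; rewrite mulf_eq0 => /orP [/eqP e|/eqP e].
      by left => p ->; rewrite evalp_horner.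
    by right => p ->.
  have [Hc|Hc] := Z'irr _ _ (closed_zero_set _) (closed_zero_set _) cov.
  - apply: (IH Q) => // [|z Zz].
      by move: sP; rewrite PQ size_mulX.
    by rewrite -evalp_horner; apply: (Hc z Zz).
  - by move: qz'; rewrite (Hc z' Z'z' q erefl) eqxx.
move/eqP: c0; apply; apply: fr => z Zz.
have := HP z (ZZ' z Zz); rewrite qZ // /evP horner_coef0 coef_map.
by [].
Qed.

Lemma no_chain (A : pt k r -> Prop) : ~ has_chain A r.+1.
Proof.
move=> [Z [H1 [H2 H3]]].
have : forall i, (i <= r.+1)%N -> exists sg : 'I_i -> 'I_r, free (Z i) sg.
  elim => [|i IH] Hi.
    have [_ [[z Zz] _]] := H1 0%N isT.
    by exists (fun i : 'I_0 => match i with Ordinal _ h => False_rect _ (notF h) end); apply: free0; exists z.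
  have [sg fr] := IH (ltnW Hi).
  have [S1 S2] := H2 i Hi.
  have [Zc _] := H1 i (ltnW Hi).
  have [_ Zirr] := H1 i.+1 Hi.
  exact: strict Zc Zirr S1 S2 fr.
move/(_ r.+1 (leqnn _)) => [sg /free_le]; by rewrite ltnn.
Qed.

Definition Lsub (i : nat) : pt k r -> Prop := fun c => forall j : 'I_r, (i <= j)%N -> c 0 j = 0.

Definition truncT (i : nat) : 'I_r -> {mpoly k[r]} := fun j => if (j < i)%N then 'X_j else 0.

Lemma truncT_L i c : Lsub i (polymap (truncT i) c).
Proof.
move=> j ij; rewrite /polymap mxE /truncT.
by rewrite ltnNge ij /= evalp0.
Qed.

Lemma truncT_id i c : Lsub i c -> polymap (truncT i) c = c.
Proof.
move=> Lc; apply/rowP => j; rewrite /polymap mxE /truncT.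
case: ltnP => ij; first by rewrite evalpXU.
by rewrite evalp0 Lc.
Qed.

Lemma Lsub_closed i : zclosed (Lsub i).
Proof.
exists (fun p => exists j : 'I_r, (i <= j)%N /\ p = 'X_j) => c; split.
  by move=> Lc p [j [ij ->]]; rewrite evalpXU Lc.
by move=> H j ij; rewrite -evalpXU; apply: H; exists j.
Qed.

Lemma Lsub_irr i : zirreducible (Lsub i).
Proof.
split; first by exists 0 => j _; rewrite mxE.
move=> W1 W2 [S1 HS1] [S2 HS2] cov.
apply: contrapT => H.
have [a1 [La1 na1]] : exists a, Lsub i a /\ ~ W1 a.
  apply: contrapT => H'; apply: H; left => x Lx; apply: contrapT => nx.
  by apply: H'; exists x.
have [a2 [La2 na2]] : exists a, Lsub i a /\ ~ W2 a.
  apply: contrapT => H'; apply: H; right => x Lx; apply: contrapT => nx.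
  by apply: H'; exists x.
have [p1 [Sp1 p1a]] : exists p, S1 p /\ evalp p a1 != 0.
  apply: contrapT => H'; apply: na1; apply/HS1 => p Sp.
  apply/eqP; apply: contrapT => ne; apply: H'; exists p; split => //; exact/negP.
have [p2 [Sp2 p2a]] : exists p, S2 p /\ evalp p a2 != 0.
  apply: contrapT => H'; apply: na2; apply/HS2 => p Sp.
  apply/eqP; apply: contrapT => ne; apply: H'; exists p; split => //; exact/negP.
pose q1 := p1 \mPo ptup (truncT i); pose q2 := p2 \mPo ptup (truncT i).
have : q1 * q2 = 0.
  apply: contrapT => /eqP nz; have [v Hv] := mpoly_nonvanish ch nz.
  pose c : pt k r := \row_j v j.
  have E : (q1 * q2).@[v] = evalp (q1 * q2) c.
    by rewrite /evalp; apply: meval_eq => j; rewrite mxE.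
  move: Hv; rewrite E evalpM /q1 /q2 !evalp_comp.
  case: (cov _ (@truncT_L i c)) => [/HS1 W|/HS2 W].
    by rewrite (W p1 Sp1) mul0r eqxx.
  by rewrite (W p2 Sp2) mulr0 eqxx.
move/eqP; rewrite mulf_eq0 => /orP [/eqP e|/eqP e].
  by move: p1a; rewrite -(truncT_id La1) -evalp_comp -/q1 e evalp0 eqxx.
by move: p2a; rewrite -(truncT_id La2) -evalp_comp -/q2 e evalp0 eqxx.
Qed.

Lemma chain_affine : has_chain (fun _ : pt k r => True) r.
Proof.
exists Lsub; split; [|split] => //.
  by move=> i _; split; [exact: Lsub_closed|exact: Lsub_irr].
move=> i ir; split; first by move=> c Lc j ij; apply: Lc; apply: ltnW.
move=> H; pose e : pt k r := \row_j (j == Ordinal ir)%:R.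
have : Lsub i.+1 e by move=> j ij; rewrite mxE; case: eqP => // ej; move: ij; rewrite ej ltnn.
move/H/(_ (Ordinal ir) (leqnn _)); rewrite mxE eqxx => /eqP; by rewrite oner_eq0.
Qed.

Lemma dim_affine : is_dim (fun _ : pt k r => True) r.
Proof. split; [exact: chain_affine|exact: no_chain]. Qed.

End Krull.
Section LinAlg.
Variable k : closedFieldType.

Definition linset m (S : pt k m -> Prop) :=
  S 0 /\ forall a u v, S u -> S v -> S (a *: u + v).

Lemma linset_comb m (S : pt k m -> Prop) p (M : 'M_(p, m)) :
  linset S -> (forall i, S (row i M)) -> forall c : 'rV_p, S (c *m M).
Proof.
move=> [S0 Sl] HM c; rewrite mulmx_sum_row.
apply: (big_ind S) => // [u v Su Sv|i _].
  by rewrite -[u]scale1r; apply: Sl.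
by rewrite -[_ *: _]addr0; apply: Sl.
Qed.

Lemma basis_exists m (S : pt k m -> Prop) : linset S ->
  exists r (B : 'M[k]_(r, m)), row_free B /\ (forall i, S (row i B)) /\
     (forall v, S v <-> (v <= B)%MS).
Proof.
move=> lS.
suff H : forall N r (B : 'M[k]_(r, m)), (m - r < N)%N -> row_free B ->
  (forall i, S (row i B)) -> exists r (B : 'M[k]_(r, m)), row_free B /\
     (forall i, S (row i B)) /\ (forall v, S v <-> (v <= B)%MS).
  apply: (H m.+1 0%N 0) => //; first by rewrite subn0.
    by rewrite /row_free mxrank0.
  by case.
elim => [|N IH] r B hN fr rows; first by [].
case: (pselect (forall v, S v -> (v <= B)%MS)) => [all|nall].
  exists r, B; split => //; split => // v; split; first exact: all.
  by move=> vB; rewrite -(mulmxKpV vB); apply: linset_comb.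
have [v [Sv nvB]] : exists v, S v /\ ~~ (v <= B)%MS.
  apply: contrapT => H; apply: nall => v Sv; apply: contrapT => nv.
  by apply: H; exists v; split => //; apply/negP.
pose B' := col_mx B v : 'M_(r + 1, m).
have BB' : (B < B')%MS.
  rewrite ltmxE col_mx_sub submx_refl (negbTE nvB) andbF andbT.
  have -> : B = row_mx 1%:M 0 *m B' by rewrite mul_row_col mul1mx mul0mx addr0.
  exact: submxMl.
have fr' : row_free B'.
  have := rank_ltmx BB'; move/eqP: fr => -> lt.
  rewrite /row_free eqn_leq rank_leq_row /=.
  have e : (r + 1 <= r.+1)%N by rewrite addn1.
  exact: leq_trans e lt.
have rm : (r + 1 <= m)%N by move/eqP: fr' => <-; apply: rank_leq_col.
apply: (IH (r + 1)%N B') => //; first by lia.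
move=> i; case: (splitP i) => j ij.
  have -> : i = lshift 1 j by apply: val_inj.
  by rewrite rowKu.
have -> : i = rshift r j by apply: val_inj.
rewrite rowKd; suff -> : row j v = v by [].
by apply/rowP => l; rewrite !mxE ord1.
Qed.

Lemma polymap_lin n m p (P : 'I_m -> {mpoly k[n]}) (M : 'M[k]_(m, p)) x :
  polymap P x *m M = polymap (fun j => \sum_l M l j *: P l) x.
Proof.
apply/rowP => j; rewrite /polymap !mxE evalp_sum; apply: eq_bigr => l _.
by rewrite evalpZ mxE mulrC.
Qed.

Lemma polymapX n (x : pt k n) : polymap (fun i => 'X_i) x = x.
Proof. by apply/rowP => i; rewrite /polymap mxE evalpXU. Qed.

Lemma closed_linzero m p (M : 'M[k]_(m, p)) : zclosed (fun v : pt k m => v *m M = 0).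
Proof.
apply: (closed_ext (A := fun v => polymap (fun i => 'X_i) v *m M = 0)).
  by move=> v; rewrite polymapX.
apply: (closed_ext (A := fun v => polymap (fun j => \sum_l M l j *: 'X_l) v = 0)).
  by move=> v; rewrite polymap_lin.
exists (fun q => exists j, q = \sum_l M l j *: 'X_l) => v; split.
  by move=> H q [j ->]; have := congr1 (fun w : 'rV_p => w 0 j) H; rewrite /polymap !mxE.
by move=> H; apply/rowP => j; rewrite /polymap !mxE; apply: H; exists j.
Qed.

End LinAlg.
Section Main.
Variables (k : closedFieldType) (ch : [pchar k] =i pred0) (n : nat)
  (X : pt k n -> Prop) (E : (pt k n -> pt k n) -> Prop).
Hypotheses (X_closed : zclosed X) (X_irr : zirreducible X).
Variables (m : nat) (iota : pt k n -> pt k m) (I : 'I_m -> {mpoly k[n]})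
  (Qp : 'I_n -> {mpoly k[m]}).
Hypotheses (Eend : forall f, E f -> is_endo X f)
  (Eid : exists f, E f /\ forall x, X x -> f x = x)
  (iotaP : forall x, X x -> iota x = polymap I x)
  (QP : forall x, X x -> polymap Qp (iota x) = x)
  (Elin : forall (f g : pt k n -> pt k n) (a : k), E f -> E g ->
      exists h, E h /\ forall x, X x -> iota (h x) = a *: iota (f x) + iota (g x)).

Definition Sx x : pt k m -> Prop := fun v => exists f, E f /\ v = iota (f x).

Lemma Sx_lin x : X x -> linset (Sx x).
Proof.
move=> Xx; split.
  have [f0 [Ef0 _]] := Eid.
  have [h [Eh Hh]] := Elin (-1) Ef0 Ef0.
  by exists h; split => //; rewrite Hh // scaleN1r addNr.
move=> a u v [f [Ef ->]] [g [Eg ->]].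
have [h [Eh Hh]] := Elin a Ef Eg.
by exists h; split => //; rewrite Hh.
Qed.

Lemma iota_inj x y : X x -> X y -> iota x = iota y -> x = y.
Proof. by move=> Xx Xy e; rewrite -(QP Xx) -(QP Xy) e. Qed.

Lemma orbit_X x y : X x -> Eorbit E x y -> X y.
Proof. by move=> Xx [f [Ef ->]]; apply: (Eend Ef).2. Qed.

Lemma orbit_iota x y : X x -> X y -> Sx x (iota y) -> Eorbit E x y.
Proof.
move=> Xx Xy [f [Ef e]]; exists f; split => //.
by apply: iota_inj => //; apply: (Eend Ef).2.
Qed.

Lemma orbit_Sx x y : X x -> Eorbit E x y -> Sx x (iota y).
Proof. by move=> Xx [f [Ef ->]]; exists f. Qed.

Lemma i_iii x0 : X x0 -> dense_in (Eorbit E x0) X ->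
  forall y, Eorbit E x0 y <-> X y.
Proof.
move=> X0 dense.
have [r [B [frB [rowsB HB]]]] := basis_exists (Sx_lin X0).
pose C := fun y => X y /\ iota y *m cokermx B = 0.
have Cc : zclosed C.
  apply: (closed_ext (A := fun y => X y /\ polymap I y *m cokermx B = 0)).
    by move=> y; split => -[Xy H]; split => //; [rewrite iotaP | rewrite -iotaP].
  by apply: closedI => //; apply: (closed_pre I (closed_linzero _)).
have OC : subset_of (Eorbit E x0) C.
  move=> y Oy; split; first exact: orbit_X Oy.
  by apply/eqP; rewrite -submxE; apply/HB; apply: orbit_Sx.
move=> y; split; first exact: orbit_X.
move=> Xy; have [_ Cy] := zclosure_min Cc OC (dense y Xy).
apply: orbit_iota => //; apply/HB; rewrite submxE; exact/eqP.
Qed.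

Lemma iii_iso x0 : X x0 -> (forall y, Eorbit E x0 y <-> X y) ->
  exists (r : nat) (f : pt k n -> pt k r) (g : pt k r -> pt k n),
    [/\ is_morph X f, is_morph (fun _ => True) g, forall y, X (g y),
        forall x, X x -> g (f x) = x & forall y, f (g y) = y].
Proof.
move=> X0 full.
have [r [B [frB [rowsB HB]]]] := basis_exists (Sx_lin X0).
pose f x := iota x *m pinvmx B.
pose g c := polymap Qp (c *m B).
have key c : exists y, X y /\ iota y = c *m B.
  have [h [Eh e]] : Sx x0 (c *m B) by apply/HB; apply: submxMl.
  by exists (h x0); split => //; apply: (Eend Eh).2.
have gE c y : X y -> iota y = c *m B -> g c = y.
  by move=> Xy e; rewrite /g -e QP.
exists r, f, g; split.
- exists (fun j => \sum_l (pinvmx B) l j *: I l) => x Xx.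
  by rewrite /f iotaP // polymap_lin.
- exists (fun i => Qp i \mPo ptup (fun j => \sum_l B l j *: 'X_l)) => c _.
  by rewrite /g -polymap_comp -polymap_lin polymapX.
- by move=> c; have [y [Xy e]] := key c; rewrite (gE c y Xy e).
- move=> x Xx; apply: gE => //; rewrite /f mulmxKpV //.
  by apply/HB; apply: orbit_Sx X0 _; apply/full.
- move=> c; have [y [Xy e]] := key c; rewrite (gE c y Xy e) /f e.
  exact: (mulmxKp frB).
Qed.

Lemma iii_iv x0 : X x0 -> (forall y, Eorbit E x0 y <-> X y) ->
  exists Z : pt k n -> Prop, zclosed Z /\
        dense_in (fun x => X x /\ ~ Z x) X /\
        forall x, X x -> ~ Z x -> forall y, Eorbit E x y <-> X y.
Proof.
move=> X0 full.
have [r [B [frB [rowsB HB]]]] := basis_exists (Sx_lin X0).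
have [F HF] : {F : 'I_r -> pt k n -> pt k n &
    forall i, E (F i) /\ row i B = iota (F i x0)}.
  apply: (@choice _ _ (fun i f => E f /\ row i B = iota (f x0))) => i.
  by have [f [Ef e]] := rowsB i; exists f.
have [PF HPF] : {PF : 'I_r -> 'I_n -> {mpoly k[n]} &
    forall i x, X x -> F i x = polymap (PF i) x}.
  apply: (@choice _ _ (fun i P => forall x, X x -> F i x = polymap P x)) => i.
  by have [[P HP] _] := Eend (HF i).1; exists P.
pose Mt y : 'M[k]_(r, m) := \matrix_(i, l) iota (F i y) 0 l.
have rowMt y i : row i (Mt y) = iota (F i y) by apply/rowP => l; rewrite !mxE.
have MtE y i l : X y -> Mt y i l = evalp (I l \mPo ptup (PF i)) y.
  move=> Xy; have XF : X (F i y) by apply: (Eend (HF i).1).2.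
  by rewrite mxE evalp_comp -HPF // iotaP // /polymap mxE.
pose C := pinvmx B.
pose PM : 'M[{mpoly k[n]}]_r :=
  \matrix_(i, j) \sum_l (I l \mPo ptup (PF i)) * (C l j)%:MP.
pose D := \det PM.
have DE y : X y -> evalp D y = \det (Mt y *m C).
  move=> Xy; rewrite /D /evalp -det_map_mx; congr (\det _).
  apply/matrixP => i j; rewrite !mxE raddf_sum /=; apply: eq_bigr => l _.
  by rewrite mevalM mevalC -/(evalp _ y) -MtE.
have Mt0 : Mt x0 = B.
  by apply/row_matrixP => i; rewrite rowMt -(HF i).2.
have D0 : evalp D x0 != 0.
  by rewrite DE // Mt0 /C mulmxVp // det1 oner_eq0.
pose Z := zero_set (fun p => p = D).
have nZ0 : ~ Z x0 by move=> H; move: D0; rewrite (H D erefl) eqxx.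
exists Z; split; first exact: closed_zero_set.
split.
  move=> x Xx.
  have cov : forall y, X y -> Z y \/ zclosure (fun x => X x /\ ~ Z x) y.
    move=> y Xy; case: (pselect (Z y)) => [Zy|nZy]; [by left|right].
    exact: sub_zclosure.
  have [H|H] := X_irr.2 _ _ (closed_zero_set _) (zclosure_closed _) cov.
    by exfalso; apply: nZ0; apply: H.
  exact: H.
move=> y Xy nZy w; split; first exact: orbit_X.
move=> Xw.
have Dy : evalp D y != 0.
  apply/negP => /eqP e; apply: nZy => p ->; exact: e.
have rk : (r <= \rank (Mt y))%N.
  move: Dy; rewrite DE // => Dy.
  have : Mt y *m C \in unitmx by rewrite unitmxE unitfE.
  move/mxrank_unit => e; exact: (leq_trans (eq_leq (esym e)) (mxrankM_maxl _ _)).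
have MtB : (Mt y <= B)%MS.
  apply/row_subP => i; rewrite rowMt; apply/HB; apply: orbit_Sx X0 _.
  by apply/full; apply: (Eend (HF i).1).2.
have BMt : (B <= Mt y)%MS.
  rewrite -(mxrank_leqif_sup MtB).2 eqn_leq mxrankS //=.
  exact: leq_trans (rank_leq_row B) rk.
apply: orbit_iota => //.
have wB : (iota w <= Mt y)%MS.
  apply: submx_trans BMt; apply/HB; apply: orbit_Sx X0 _; exact/full.
rewrite -(mulmxKpV wB); apply: linset_comb; first exact: Sx_lin.
by move=> i; rewrite rowMt; exists (F i); split => //; exact: (HF i).1.
Qed.

Lemma iv_iii (Z : pt k n -> Prop) : dense_in (fun x => X x /\ ~ Z x) X ->
  (forall x, X x -> ~ Z x -> forall y, Eorbit E x y <-> X y) ->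
  exists x, X x /\ forall y, Eorbit E x y <-> X y.
Proof.
move=> dense H.
have [x0 X0] := X_irr.1.
have [y [Xy nZy]] : exists y, X y /\ ~ Z y.
  apply: contrapT => nex; have := dense x0 X0 1.
  rewrite evalp1 => /(_ _) e.
  have : (1 : k) = 0.
    apply: e => y [Xy nZy]; exfalso; apply: nex; by exists y.
  by move/eqP; rewrite oner_eq0.
by exists y; split => //; apply: H.
Qed.

Lemma ii_i d : is_dX X E d -> is_dim X d -> exists x, X x /\ dense_in (Eorbit E x) X.
Proof.
move=> [[x [Xx dimx]] _] [_ nch]; exists x; split => //.
have YX : subset_of (zclosure (Eorbit E x)) X.
  apply: zclosure_min => //; move=> y; exact: orbit_X.
apply: contrapT => nd; apply: nch.
apply: (chain_extend dimx.1 YX X_closed X_irr).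
by move=> H; apply: nd => y /H.
Qed.

Lemma i_ii x0 : X x0 -> dense_in (Eorbit E x0) X ->
  exists d, is_dX X E d /\ is_dim X d.
Proof.
move=> X0 dense.
have full := i_iii X0 dense.
have [r [f [g [fm gm gX gf fg]]]] := iii_iso X0 full.
have dimX : is_dim X r.
  split.
    apply: (chain_transport (A := fun _ : pt k r => True) (B := X) (phi := g) (psi := f)) => //.
    exact: (dim_affine ch r).1.
  move=> H; apply: (@no_chain _ r (fun _ => True)).
  by apply: (chain_transport (A := X) (B := fun _ : pt k r => True) (phi := f) (psi := g)) (closedT _ _) fm gm _ _ gf _ H.
exists r; split => //; split.
  exists x0; split => //; apply: is_dim_ext dimX => y; split; first exact: dense.
  by apply: zclosure_min => // z; apply: orbit_X.
move=> x e Xx [che _]; case: (leqP e r) => // lt; exfalso.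
apply: dimX.2; apply: (has_chain_le _ lt); apply: has_chain_sub che.
by apply: zclosure_min => // z; apply: orbit_X.
Qed.

End Main.

Unset Implicit Arguments.
Set Strict Implicit.

Theorem lemma4p5p1 (k : closedFieldType) (k_char0 : [pchar k] =i pred0)
    (n : nat) (X : pt k n -> Prop) (E : (pt k n -> pt k n) -> Prop)
    (X_closed : zclosed X) (X_irr : zirreducible X)
    (E_lin : linear_semigroup X E) :
  let cond_i := exists x, X x /\ dense_in (Eorbit E x) X in
  let cond_ii := exists d, is_dX X E d /\ is_dim X d in
  let cond_iii := exists x, X x /\ forall y, Eorbit E x y <-> X y in
  let cond_iv := exists Z : pt k n -> Prop, zclosed Z /\
        dense_in (fun x => X x /\ ~ Z x) X /\
        forall x, X x -> ~ Z x -> forall y, Eorbit E x y <-> X y in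
  [/\ cond_i <-> cond_ii, cond_i <-> cond_iii, cond_i <-> cond_iv &
      (cond_i ->
       exists (m : nat) (f : pt k n -> pt k m) (g : pt k m -> pt k n),
         [/\ is_morph X f, is_morph (fun _ => True) g,
             forall y, X (g y),
             forall x, X x -> g (f x) = x &
             forall y, f (g y) = y])].
Proof.
move=> cond_i cond_ii cond_iii cond_iv.
have [[Eend [Eid _]] [m [iota [[[I HI] [_ [Qp HQ]]] Elin]]]] := E_lin.
have h13 : cond_i -> cond_iii.
  move=> [x [Xx d]]; exists x; split => //.
  exact: (i_iii X_closed Eend Eid HI HQ Elin Xx d).
have h31 : cond_iii -> cond_i.
  move=> [x [Xx f]]; exists x; split => // y Xy.
  by apply: sub_zclosure; apply/f.
have h34 : cond_iii -> cond_iv.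
  move=> [x [Xx f]]; exact: (iii_iv X_irr Eend Eid HI HQ Elin Xx f).
have h43 : cond_iv -> cond_iii.
  by move=> [Z [_ [d H]]]; exact: (iv_iii X_irr d H).
split.
- split.
    move=> [x [Xx d]]; exact: (i_ii k_char0 X_closed Eend Eid HI HQ Elin Xx d).
  by move=> [d [H1 H2]]; exact: (ii_i X_closed X_irr Eend H1 H2).
- by split.
- by split => [/h13/h34|/h43/h31].
- move=> /h13 [x [Xx f]]; exact: (iii_iso Eend Eid HI HQ Elin Xx f).
Qed.
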